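(* Let $G$ be a connected graph with $|V(G)|\geq 3$. The following are equivalent: (a) $G$ is a complete graph; (b) $\chi(\mathcal{R}(G))=2$; (c) $\mathcal{R}(G)$ contains no cycle of length $5$.
   Context: For a connected graph $G$, a search tree on $G$ is a rooted tree with vertex set $V(G)$ defined recursively: its root is some vertex $r\in V(G)$, and the children of $r$ are the roots of search trees on the connected components of $G-r$. For a rooted tree $T$ and $w\in V(T)$, $T|w$ denotes the subtree rooted at $w$. Let $T$ be a search tree on $G$, let $v$ be a child of $u$ in $T$, and let $p$ be the parent of $u$ (if it exists). The $uv$-rotation transforms $T$ into the search tree $T'$ in which: $u$ is a child of $v$ and $v$ is a child of $p$ (or $v$ is the root if $u$ was the root); every subtree of $u$ in $T$ other than $T|v$ is a subtree of $u$ in $T'$; and every subtree $S$ of $v$ in $T$ is a subtree of $u$ in $T'$ if $u$ is adjacent in $G$ to some vertex of $S$, and a subtree of $v$ in $T'$ otherwise. The rotation graph $\mathcal{R}(G)$ is the graph whose vertices are the search trees on $G$, two being adjacent iff they differ by one rotation. $\chi$ denotes chromatic number. *)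

(* Defs.v *)
From mathcomp Require Import all_boot.
Set Implicit Arguments. Unset Strict Implicit. Unset Printing Implicit Defensive.

(* A simple graph: vertex type T (finite), adjacency e : rel T, assumed
   symmetric and irreflexive in the theorem. *)

Section SearchTrees.
Variables (T : finType) (e : rel T).

Definition induced (S : {set T}) : rel T :=
  fun a b => [&& a \in S, b \in S & e a b].

Definition comp (S : {set T}) (x : T) : {set T} :=
  [set y | connect (induced S) x y].

(* A rooted tree on V(G) is encoded by its parent function
   par : T -> option T (None exactly at the root).
   [stree par S r] : the restriction of par to S is a search tree on G[S]
   rooted at r, following the recursive definition: r \in S and the children
   of r are the roots of search trees on the components of G[S] - r. *)
Inductive stree (par : T -> option T) : {set T} -> T -> Prop :=
| STree (S : {set T}) (r : T) :
    r \in S ->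
    (forall x : T, x \in S :\ r ->
       exists2 c, c \in comp (S :\ r) x &
         par c = Some r /\ stree par (comp (S :\ r) x) c) ->
    stree par S r.

Definition search_tree (par : {ffun T -> option T}) : Prop :=
  exists2 r, par r = None & stree par [set: T] r.

(* vertex set of the subtree T|w: vertices having w as ancestor-or-self *)
Definition pfun (par : {ffun T -> option T}) (x : T) : T := odflt x (par x).
Definition subtree (par : {ffun T -> option T}) (w : T) : {set T} :=
  [set x | fconnect (pfun par) x w].

Definition rotate (par : {ffun T -> option T}) (u v : T) : {ffun T -> option T} :=
  [ffun x =>
     if x == v then par u
     else if x == u then Some v
     else if par x == Some v then
       (if [exists y in subtree par x, e u y] then Some u else Some v)
     else par x].

Definition rot_adj (p q : {ffun T -> option T}) : Prop :=
  search_tree p /\ search_tree q /\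
  ((exists u v, p v = Some u /\ q = rotate p u v) \/
   (exists u v, q v = Some u /\ p = rotate q u v)).

Definition rot_colorable (k : nat) : Prop :=
  exists c : {ffun T -> option T} -> nat,
    (forall p, search_tree p -> c p < k) /\
    (forall p q, rot_adj p q -> c p <> c q).

Definition rot_chromatic_number (k : nat) : Prop :=
  rot_colorable k /\ forall j, rot_colorable j -> k <= j.

Definition rot_has_C5 : Prop :=
  exists p0 p1 p2 p3 p4 : {ffun T -> option T},
    uniq [:: p0; p1; p2; p3; p4] /\
    rot_adj p0 p1 /\ rot_adj p1 p2 /\ rot_adj p2 p3 /\
    rot_adj p3 p4 /\ rot_adj p4 p0.

End SearchTrees.

Definition complete_graph (T : finType) (e : rel T) : Prop :=
  forall x y : T, x != y -> e x y.

(* Main.v *)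
Require Import Defs.
From mathcomp Require Import all_boot all_fingroup.
From Stdlib Require Import ClassicalEpsilon Classical.
From mathcomp Require Import zify.
Set Implicit Arguments. Unset Strict Implicit. Unset Printing Implicit Defensive.

Section Gen.
Variables (T : finType) (e : rel T).
Hypothesis e_sym : symmetric e.

Lemma induced_sym S : symmetric (induced e S).
Proof. by move=> a b; rewrite /induced e_sym; case: (a \in S); case: (b \in S). Qed.

Lemma connect_mono (S S' : {set T}) x y : S \subset S' ->
  connect (induced e S) x y -> connect (induced e S') x y.
Proof.
move=> sub; apply: connect_sub => a b /and3P [aS bS eab]; apply: connect1.
by rewrite /induced (subsetP sub _ aS) (subsetP sub _ bS) eab.
Qed.

Lemma connect_in (S : {set T}) x y : connect (induced e S) x y ->
  x = y \/ (x \in S /\ y \in S).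
Proof.
move=> H; have cl : closed (induced e S) (mem S).
  by move=> a b /and3P [-> -> _].
case/connectP: (H) => [[|z p]] /=; first by move=> _ ->; left.
case/andP => /and3P [xS _ _] _ _; right; split => //.
by rewrite -(closed_connect cl H).
Qed.

Lemma connect_restrict (S A : {set T}) z w : z \in A ->
  (forall a b, a \in A -> induced e S a b -> b \in A) ->
  connect (induced e S) z w -> connect (induced e (S :&: A)) z w.
Proof.
move=> zA cl /connectP [p pth ->]; elim: p z zA pth => [|y p IH] z zA /=.
  by move=> _; exact: connect0.
case/andP => ezy pth; have yA := cl _ _ zA ezy.
apply: connect_trans (IH _ yA pth); apply: connect1.
by move: ezy => /and3P [zS yS eq]; rewrite /induced !inE zS yS zA yA eq.
Qed.

Lemma compE S x y : (y \in Defs.comp e S x) = connect (induced e S) x y.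
Proof. by rewrite /Defs.comp inE. Qed.

Lemma connect_symS S x y : connect (induced e S) x y -> connect (induced e S) y x.
Proof. by rewrite (sym_connect_sym (induced_sym S)). Qed.

Section Rank.
Variable rk : T -> nat.
Hypothesis rk_inj : injective rk.

Definition U x := [set z | rk x <= rk z].
Definition B x := Defs.comp e (U x) x.
Definition cand x := [set y | (rk y < rk x) && (x \in B y)].
Definition par_rk : {ffun T -> option T} :=
  [ffun x => if [pick y in cand x] is Some y0
             then Some [arg max_(y > y0 in cand x) rk y] else None].

Lemma par_rkP x y : par_rk x = Some y <->
  y \in cand x /\ forall z, z \in cand x -> rk z <= rk y.
Proof.
rewrite ffunE; case: pickP => [y0 Hy0|H0].
  case: arg_maxnP => // m Hm Hmax; split => [[<-]|[Hy Hz]].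
    by split => // z /Hmax.
  congr Some; apply: rk_inj; apply/eqP; rewrite eqn_leq; apply/andP; split; [exact: Hz | exact: Hmax].
by split => // [[Hy _]]; move: (H0 y); rewrite Hy.
Qed.

Lemma par_rk_None x : (forall y, y \in cand x -> False) -> par_rk x = None.
Proof.
move=> H; rewrite ffunE; case: pickP => // y0 Hy0; case: (H _ Hy0).
Qed.

Lemma par_rk_NoneP x : par_rk x = None -> forall y, y \in cand x -> False.
Proof.
rewrite ffunE; case: pickP => [y0 _|H0] // _ y; by rewrite H0.
Qed.

Lemma par_rk_lt x y : par_rk x = Some y -> rk y < rk x.
Proof. by case/par_rkP; rewrite inE => /andP []. Qed.

Lemma x_in_B x : x \in B x.
Proof. by rewrite inE connect0. Qed.

Lemma B_sub_U x y : y \in B x -> y \in U x.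
Proof.
rewrite inE => /connect_in [<-|[]//]; by rewrite inE leqnn.
Qed.

Lemma stree_B r : stree e par_rk (B r) r.
Proof.
have [n] := ubnP #|U r|; elim: n r => // n IH r Hn.
constructor; first exact: x_in_B.
move=> x /setD1P [xr xB].
set W := [set z | rk r < rk z].
have WU : W \subset U r by apply/subsetP => z; rewrite !inE => /ltnW.
have BW : forall z, z \in B r -> z != r -> z \in W.
  move=> z zB zr; move/B_sub_U: zB; rewrite !inE leq_eqVlt => /orP [/eqP H|//].
  by move/rk_inj: H => H; rewrite H eqxx in zr.
have CW : Defs.comp e (B r :\ r) x = Defs.comp e W x.
  apply/setP => y; rewrite !inE; apply/idP/idP.
    apply: connect_mono; apply/subsetP => z /setD1P [zr zB]; exact: BW.
  move=> H; have := connect_restrict (A := B r) xB _ H.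
  have -> : W :&: B r = B r :\ r.
    apply/setP => z; rewrite in_setI in_setD1; apply/andP/andP => [[zW zB]|[zr zB]].
      by split => //; apply/negP => /eqP Ez; move: zW; rewrite inE Ez ltnn.
    by split => //; apply: BW.
  apply=> a b; rewrite !inE => Ha Hab; apply: connect_trans Ha _.
  apply: connect1; move: Hab => /and3P [aW bW eab].
  by rewrite /induced (subsetP WU _ aW) (subsetP WU _ bW) eab.
have xW : x \in W by exact: BW.
have xC : x \in Defs.comp e W x by rewrite inE connect0.
case: (@arg_minnP _ x (fun y => y \in Defs.comp e W x) rk xC) => c cC cmin.
have cW : c \in W.
  by move: cC; rewrite compE => /connect_in [<-|[]].
have UcW : U c \subset W.
  apply/subsetP => z; rewrite !inE => Hz; move: cW; rewrite inE => Hc.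
  exact: leq_trans Hc Hz.
have BC : B c = Defs.comp e W x.
  apply/setP => y; rewrite !inE; apply/idP/idP.
    move=> H; move: cC; rewrite inE => cC; exact: connect_trans cC (connect_mono UcW H).
  move=> H; move: (cC); rewrite inE => cC'.
  have Hcy := connect_trans (connect_symS cC') H.
  have := connect_restrict (A := Defs.comp e W x) cC _ Hcy.
  have sub : W :&: Defs.comp e W x \subset U c.
    by apply/subsetP => z; rewrite !inE => /andP [_ Hz]; apply: cmin; rewrite inE.
  move=> H'; apply: connect_mono sub (H' _).
  move=> a b; rewrite !inE => Ha Hab; apply: connect_trans Ha (connect1 Hab).
exists c; first by rewrite CW.
split.
  apply/par_rkP; split.
    rewrite inE; move: (cW); rewrite inE => -> /=.
    move: (cC); rewrite -CW compE => /connect_in [<-|[]]; first by [].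
    by move=> _ /setD1P [].
  move=> z; rewrite inE => /andP [Hzc HcB]; rewrite leqNgt; apply/negP => Hrz.
  have UzW : U z \subset W.
    apply/subsetP => w; rewrite !inE => Hw; exact: leq_trans Hrz Hw.
  move: HcB; rewrite inE => /(connect_mono UzW) Hzc'.
  have : z \in Defs.comp e W x.
    by move: cC; rewrite !inE => cC; exact: connect_trans cC (connect_symS Hzc').
  by move/cmin; rewrite leqNgt Hzc.
rewrite CW -BC; apply: IH.
have H1 : U c \subset U r :\ r.
  apply/subsetP => z zU; rewrite in_setD1 (subsetP WU _ (subsetP UcW _ zU)) andbT.
  by apply/negP => /eqP Ez; move: (subsetP UcW _ zU); rewrite Ez inE ltnn.
move: Hn; rewrite (cardsD1 r (U r)) inE leqnn add1n ltnS => Hn.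
exact: leq_ltn_trans (subset_leq_card H1) Hn.
Qed.

Hypothesis e_conn : forall x y : T, connect e x y.

Lemma search_rk (x0 : T) : search_tree e par_rk.
Proof.
case: (arg_minnP rk (isT : predT x0)) => r0 _ Hr0.
exists r0.
  apply: par_rk_None => y; rewrite inE => /andP [H _].
  by move: (Hr0 y isT); rewrite leqNgt H.
have -> : [set: T] = B r0.
  apply/setP => y; rewrite !inE.
  have -> : U r0 = setT by apply/setP => z; rewrite !inE Hr0.
  have E : induced e setT =2 e by move=> a b; rewrite /induced !in_setT.
  by rewrite (eq_connect E) e_conn.
exact: stree_B.
Qed.

End Rank.

Lemma par_rk_ext (R R' : T -> nat) x x' : injective R -> injective R' ->
  cand R x =i cand R' x' -> {in cand R x, R =1 R'} ->
  par_rk R x = par_rk R' x'.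
Proof.
move=> iR iR' Hc HR; case H: (par_rk R x) => [y|].
  case/(par_rkP iR): H => yc ymax; symmetry; apply/(par_rkP iR'); split.
    by rewrite -Hc.
  by move=> z; rewrite -Hc => zc; rewrite -!HR //; exact: ymax.
symmetry; apply: par_rk_None => y; rewrite -Hc; exact: par_rk_NoneP H y.
Qed.

Lemma isolated (S : {set T}) z w : (forall y, ~~ induced e S z y) ->
  connect (induced e S) z w -> w = z.
Proof.
move=> H /connectP [[|y p]] /=; first by move=> _ ->.
by case/andP => Hzy; move: (H y); rewrite Hzy.
Qed.

Lemma leaf (p : {ffun T -> option T}) w y : (forall z, p z != Some w) ->
  y \in subtree p w -> y = w.
Proof.
move=> H; rewrite inE => /iter_findex; move: (findex _ _ _) => n.
elim: n y => [|n IH] y /=; first done.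
move=> Hn; apply: IH; move: Hn; rewrite /pfun.
case Hz: (p (iter n _ y)) => [z|] //= Ez.
by move: (H (iter n (pfun p) y)); rewrite /pfun Hz Ez eqxx.
Qed.

Section Five.
Variables a b c : T.
Hypotheses (ab : a != b) (bc : b != c) (ac : a != c) (eab : e a b) (ebc : e b c).
Hypothesis e_irr : irreflexive e.
Hypothesis e_conn : forall x y : T, connect e x y.

Definition X : {set T} := [set a; b; c].
Definition N := #|T|.
Definition good (R : T -> nat) :=
  (forall x, x \notin X -> R x = enum_rank x) /\ (forall x, x \in X -> N <= R x).

Lemma inX z : z \in X -> [\/ z = a, z = b | z = c].
Proof.
rewrite /X !inE => /orP [/orP [] |] /eqP ->; by [constructor 1|constructor 2|constructor 3].
Qed.

Lemma aX : a \in X. Proof. by rewrite /X !inE eqxx. Qed.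
Lemma bX : b \in X. Proof. by rewrite /X !inE eqxx orbT. Qed.
Lemma cX : c \in X. Proof. by rewrite /X !inE eqxx !orbT. Qed.

Lemma rk_lt (R : T -> nat) x : good R -> x \notin X -> R x < N.
Proof. by case=> H1 _ xX; rewrite H1 //; exact: ltn_ord. Qed.

Lemma U_out R R' y : good R -> good R' -> y \notin X -> U R y = U R' y.
Proof.
move=> gR gR' yX; apply/setP => z; rewrite !inE.
have Ry : R y = R' y by rewrite gR.1 // gR'.1.
case zX: (z \in X).
  have H1 := gR.2 z zX; have H2 := gR'.2 z zX.
  have H3 := rk_lt gR yX; have H4 := rk_lt gR' yX.
  by apply/idP/idP => _; apply: ltnW; [apply: leq_trans H4 H2|apply: leq_trans H3 H1].
by have zX' := negbT zX; rewrite (gR.1 z zX') (gR'.1 z zX') Ry.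
Qed.

Lemma X_sub_U R y : good R -> y \notin X -> X \subset U R y.
Proof.
move=> gR yX; apply/subsetP => z zX; rewrite inE; apply: ltnW.
exact: leq_trans (rk_lt gR yX) (gR.2 z zX).
Qed.

Lemma X_conn (S : {set T}) z w : X \subset S -> z \in X -> w \in X ->
  connect (induced e S) z w.
Proof.
move=> sub zX wX.
have aS := subsetP sub _ aX; have bS := subsetP sub _ bX; have cS := subsetP sub _ cX.
have Hba : connect (induced e S) b a by apply: connect1; rewrite /induced aS bS e_sym.
have Hbc : connect (induced e S) b c by apply: connect1; rewrite /induced cS bS.
have Hb : forall y, y \in X -> connect (induced e S) b y.
  by move=> y /inX [->|->|->] //; exact: connect0.
exact: connect_trans (connect_symS (Hb _ zX)) (Hb _ wX).
Qed.

Lemma cand_out R R' x : good R -> good R' -> x \notin X -> cand R x =i cand R' x.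
Proof.
move=> gR gR' xX y; rewrite !inE.
case yX: (y \in X).
  have H1 := gR.2 y yX; have H2 := gR'.2 y yX.
  have H3 := rk_lt gR xX; have H4 := rk_lt gR' xX.
  have -> : R y < R x = false by apply/negbTE; rewrite -leqNgt; apply: ltnW; exact: leq_trans H3 H1.
  have -> : R' y < R' x = false by apply/negbTE; rewrite -leqNgt; apply: ltnW; exact: leq_trans H4 H2.
  by [].
have yX' := negbT yX.
rewrite gR.1 // gR'.1 // gR.1 // gR'.1 //.
by rewrite /B (U_out gR gR').
Qed.

Lemma cand_notX R x y : good R -> x \notin X -> y \in cand R x -> y \notin X.
Proof.
move=> gR xX; rewrite inE => /andP [H _]; apply/negP => yX.
have := rk_lt gR xX; have := gR.2 y yX; lia.
Qed.

Lemma par_out R R' x : injective R -> injective R' -> good R -> good R' ->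
  x \notin X -> par_rk R x = par_rk R' x.
Proof.
move=> iR iR' gR gR' xX; apply: par_rk_ext => //; first exact: cand_out.
move=> y yc; have yX := cand_notX gR xX yc; by rewrite gR.1 // gR'.1.
Qed.

Lemma par_out_notX R x y : injective R -> good R -> x \notin X ->
  par_rk R x = Some y -> y \notin X.
Proof. by move=> iR gR xX /(par_rkP iR) [yc _]; exact: cand_notX yc. Qed.

Lemma par_top R R' t t' : injective R -> injective R' -> good R -> good R' ->
  t \in X -> t' \in X -> (forall z, z \in X -> R t <= R z) ->
  (forall z, z \in X -> R' t' <= R' z) -> par_rk R t = par_rk R' t'.
Proof.
move=> iR iR' gR gR' tX t'X tmin t'min.
have Hc : cand R t =i cand R' t'.
  move=> y; rewrite !inE; case yX: (y \in X).
    by rewrite ltnNge tmin // ltnNge t'min.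
  have -> : R y < R t by apply: leq_trans (rk_lt gR _) (gR.2 t tX); rewrite yX.
  have -> : R' y < R' t' by apply: leq_trans (rk_lt gR' _) (gR'.2 t' t'X); rewrite yX.
  rewrite /= /B (U_out gR gR' (negbT yX)).
  have sub := X_sub_U gR' (negbT yX).
  apply/idP/idP => H.
    exact: connect_trans H (X_conn sub tX t'X).
  exact: connect_trans H (X_conn sub t'X tX).
apply: par_rk_ext => // y yc.
have yX : y \notin X.
  apply/negP => yX; move: yc; rewrite inE ltnNge tmin //.
by rewrite gR.1 // gR'.1.
Qed.

Lemma par_in R x y : injective R -> good R -> y \in X ->
  R y < R x -> x \in B R y ->
  (forall z, z \in X -> R y < R z -> R z < R x -> x \notin B R z) ->
  par_rk R x = Some y.
Proof.
move=> iR gR yX Hlt HB Hz; apply/(par_rkP iR); split; first by rewrite inE Hlt HB.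
move=> z; rewrite inE => /andP [Hzx HzB].
case zX: (z \in X).
  rewrite leqNgt; apply/negP => Hyz; by move: (Hz z zX Hyz Hzx); rewrite HzB.
by apply: ltnW; apply: leq_trans (rk_lt gR _) (gR.2 y yX); rewrite zX.
Qed.

Lemma B_edge R y x : R y <= R x -> e y x -> x \in B R y.
Proof.
move=> Hyx eyx; rewrite /B compE; apply: connect1.
by rewrite /induced !inE leqnn Hyx eyx.
Qed.

Lemma B_path R y m x : R y <= R m -> R y <= R x -> e y m -> e m x -> x \in B R y.
Proof.
move=> H1 H2 e1 e2; rewrite /B compE.
have h1 : induced e (U R y) y m by rewrite /induced !inE leqnn H1 e1.
have h2 : induced e (U R y) m x by rewrite /induced !inE H1 H2 e2.
exact: connect_trans (connect1 h1) (connect1 h2).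
Qed.

Definition rk3 (ia ib ic : nat) (x : T) : nat :=
  if x == a then N + ia else if x == b then N + ib else if x == c then N + ic
  else enum_rank x.

Lemma rk3a ia ib ic : rk3 ia ib ic a = N + ia.
Proof. by rewrite /rk3 eqxx. Qed.
Lemma rk3b ia ib ic : rk3 ia ib ic b = N + ib.
Proof. by rewrite /rk3 eq_sym (negbTE ab) eqxx. Qed.
Lemma rk3c ia ib ic : rk3 ia ib ic c = N + ic.
Proof. by rewrite /rk3 eq_sym (negbTE ac) eq_sym (negbTE bc) eqxx. Qed.

Lemma rk3_good ia ib ic : good (rk3 ia ib ic).
Proof.
split.
  move=> x; rewrite /X !inE => /norP [/norP [xa xb] xc].
  by rewrite /rk3 (negbTE xa) (negbTE xb) (negbTE xc).
by move=> x /inX [->|->|->]; rewrite ?rk3a ?rk3b ?rk3c leq_addr.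
Qed.

Lemma rk3_inj ia ib ic : ia <> ib -> ib <> ic -> ia <> ic -> injective (rk3 ia ib ic).
Proof.
move=> h1 h2 h3 x y.
have [gx gy] := rk3_good ia ib ic.
case xX: (x \in X); case yX: (y \in X).
- case/inX: xX => ->; case/inX: yX => ->; rewrite ?rk3a ?rk3b ?rk3c //; lia.
- move=> E; have := gy x xX; have := rk_lt (rk3_good ia ib ic) (negbT yX).
  rewrite E; lia.
- move=> E; have := gy y yX; have := rk_lt (rk3_good ia ib ic) (negbT xX).
  rewrite E; lia.
- rewrite (gx x (negbT xX)) (gx y (negbT yX)) => /val_inj; exact: enum_rank_inj.
Qed.


Lemma rotate_eqX R R' u v : injective R -> injective R' -> good R -> good R' ->
  v \in X -> par_rk R' v = par_rk R u -> par_rk R' u = Some v ->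
  (forall w, w \in X -> w != u -> w != v ->
     par_rk R' w = if par_rk R w == Some v then
       (if [exists y in subtree (par_rk R) w, e u y] then Some u else Some v)
       else par_rk R w) ->
  rotate e (par_rk R) u v = par_rk R'.
Proof.
move=> iR iR' gR gR' vX Hv Hu Hw; apply/ffunP => x; rewrite /rotate ffunE.
case: (eqVneq x v) => [->|xv] //; case: (eqVneq x u) => [->|xu] //.
case xX: (x \in X); first by rewrite Hw.
have xX' := negbT xX.
have -> : (par_rk R x == Some v) = false.
  apply/negbTE/eqP => H; have := par_out_notX iR gR xX' H; by rewrite vX.
exact: par_out.
Qed.

Lemma i012 : injective (rk3 0 1 2). Proof. apply: rk3_inj; lia. Qed.
Lemma i102 : injective (rk3 1 0 2). Proof. apply: rk3_inj; lia. Qed.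
Lemma i210 : injective (rk3 2 1 0). Proof. apply: rk3_inj; lia. Qed.
Lemma i120 : injective (rk3 1 2 0). Proof. apply: rk3_inj; lia. Qed.
Lemma i021 : injective (rk3 0 2 1). Proof. apply: rk3_inj; lia. Qed.

Local Notation R1 := (rk3 0 1 2).
Local Notation R3 := (rk3 1 0 2).
Local Notation R4 := (rk3 2 1 0).
Local Notation R5 := (rk3 1 2 0).
Local Notation R2 := (rk3 0 2 1).
Local Notation P := (par_rk R1 a).

Ltac rks := rewrite ?rk3a ?rk3b ?rk3c.
Ltac vac := let z := fresh "z" in
  move=> z /inX [->|->|->]; rks => ? ?; exfalso; lia.
Ltac mintac := let z := fresh "z" in move=> z /inX [->|->|->]; rks; lia.

Lemma eba : e b a. Proof. by rewrite e_sym. Qed.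
Lemma ecb : e c b. Proof. by rewrite e_sym. Qed.

Lemma T1b : par_rk R1 b = Some a.
Proof. apply: par_in i012 (rk3_good _ _ _) aX _ _ _.
all: rks; try lia.
  by apply: B_edge => //; rks; lia.
all: try vac. Qed.
Lemma T1c : par_rk R1 c = Some b.
Proof. apply: par_in i012 (rk3_good _ _ _) bX _ _ _.
all: rks; try lia.
  by apply: B_edge => //; rks; lia.
all: try vac. Qed.
Lemma T3b : par_rk R3 b = P.
Proof. apply: par_top i102 i012 (rk3_good _ _ _) (rk3_good _ _ _) bX aX _ _; mintac. Qed.
Lemma T3a : par_rk R3 a = Some b.
Proof. apply: par_in i102 (rk3_good _ _ _) bX _ _ _.
all: rks; try lia.
  by apply: B_edge; rks; [lia|exact: eba].
all: try vac. Qed.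
Lemma T3c_K : e a c -> par_rk R3 c = Some a.
Proof. move=> eac; apply: par_in i102 (rk3_good _ _ _) aX _ _ _.
all: rks; try lia.
  by apply: B_edge => //; rks; lia.
all: try vac. Qed.
Lemma T3c_P : ~~ e a c -> par_rk R3 c = Some b.
Proof.
move=> nac; apply: par_in i102 (rk3_good _ _ _) bX _ _ _.
all: rks; try lia.
  by apply: B_edge => //; rks; lia.
move=> z /inX [->|->|->]; rks => ? ?; try (exfalso; lia).
rewrite /B compE; apply/negP => /isolated H.
suff : c = a by move=> Eca; move: ac; rewrite Eca eqxx.
apply: H => y; rewrite /induced !inE rk3a.
case yX: (y \in X).
  case/inX: yX => ->; rks.
  - by rewrite e_irr !andbF.
  - by apply/negP => /and3P [_ H1 _]; lia.
  - by rewrite (negbTE nac) !andbF.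
have := rk_lt (rk3_good 1 0 2) (negbT yX) => Hy.
by apply/negP => /and3P [_ H1 _]; lia.
Qed.
Lemma T4c : par_rk R4 c = P.
Proof. apply: par_top i210 i012 (rk3_good _ _ _) (rk3_good _ _ _) cX aX _ _; mintac. Qed.
Lemma T4b : par_rk R4 b = Some c.
Proof. apply: par_in i210 (rk3_good _ _ _) cX _ _ _.
all: rks; try lia.
  by apply: B_edge; rks; [lia|exact: ecb].
all: try vac. Qed.
Lemma T4a : par_rk R4 a = Some b.
Proof. apply: par_in i210 (rk3_good _ _ _) bX _ _ _.
all: rks; try lia.
  by apply: B_edge; rks; [lia|exact: eba].
all: try vac. Qed.
Lemma T5c : par_rk R5 c = P.
Proof. apply: par_top i120 i012 (rk3_good _ _ _) (rk3_good _ _ _) cX aX _ _; mintac. Qed.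
Lemma T5a : par_rk R5 a = Some c.
Proof.
apply: par_in i120 (rk3_good _ _ _) cX _ _ _.
all: rks; try lia; try vac.
apply: (@B_path _ _ b).
all: rks; try lia; try exact: ecb; try exact: eba.
Qed.
Lemma T5b : par_rk R5 b = Some a.
Proof. apply: par_in i120 (rk3_good _ _ _) aX _ _ _.
all: rks; try lia.
  by apply: B_edge => //; rks; lia.
all: try vac. Qed.
Lemma T2a : par_rk R2 a = P.
Proof. apply: par_top i021 i012 (rk3_good _ _ _) (rk3_good _ _ _) aX aX _ _; mintac. Qed.
Lemma T2c : par_rk R2 c = Some a.
Proof.
apply: par_in i021 (rk3_good _ _ _) aX _ _ _.
all: rks; try lia; try vac.
apply: (@B_path _ _ b).
all: rks; try lia; try exact: eab; try exact: ebc.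
Qed.
Lemma T2b : par_rk R2 b = Some c.
Proof. apply: par_in i021 (rk3_good _ _ _) cX _ _ _.
all: rks; try lia.
  by apply: B_edge; rks; [lia|exact: ecb].
all: try vac. Qed.

Lemma P_notX y : y \in X -> P != Some y.
Proof.
move=> yX; apply/eqP => H; have := par_rk_lt i012 H; rks.
have := (rk3_good 0 1 2).2 y yX; lia.
Qed.

Lemma T1_leaf_c z : par_rk R1 z != Some c.
Proof.
apply/eqP => H; have := par_rk_lt i012 H; rks.
case zX: (z \in X).
  case/inX: zX => ->; rks; lia.
have := rk_lt (rk3_good 0 1 2) (negbT zX); lia.
Qed.

Lemma in_sub (p : {ffun T -> option T}) w : w \in subtree p w.
Proof. by rewrite /subtree inE connect0. Qed.


Lemma Some_neq (x y : T) : x != y -> Some x != Some y.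
Proof. by apply: contra => /eqP [->]. Qed.

Lemma neq_at (p q : {ffun T -> option T}) x : p x != q x -> p != q.
Proof. by apply: contra => /eqP ->. Qed.

Lemma Some_eqF (x y : T) : x != y -> (Some x == Some y) = false.
Proof. by move/Some_neq/negbTE. Qed.

Lemma C5 : ~~ e a c -> rot_has_C5 e.
Proof.
move=> nac.
have ST : forall R, injective R -> search_tree e (par_rk R).
  by move=> R iR; exact: search_rk iR e_conn a.
exists (par_rk R1), (par_rk R3), (par_rk R4), (par_rk R5), (par_rk R2).
split.
  rewrite /= !inE !negb_or !andbT; repeat (apply/andP; split).
  - by apply: (neq_at (x:=a)); rewrite T3a P_notX ?bX.
  - by apply: (neq_at (x:=a)); rewrite T4a P_notX ?bX.
  - by apply: (neq_at (x:=a)); rewrite T5a P_notX ?cX.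
  - by apply: (neq_at (x:=b)); rewrite T1b T2b Some_neq.
  - by apply: (neq_at (x:=b)); rewrite T3b T4b P_notX ?cX.
  - by apply: (neq_at (x:=a)); rewrite T3a T5a Some_neq.
  - by apply: (neq_at (x:=a)); rewrite T3a T2a eq_sym P_notX ?bX.
  - by apply: (neq_at (x:=b)); rewrite T4b T5b Some_neq // eq_sym.
  - by apply: (neq_at (x:=a)); rewrite T4a T2a eq_sym P_notX ?bX.
  - by apply: (neq_at (x:=a)); rewrite T5a T2a eq_sym P_notX ?cX.
split.
  split; [exact: ST i012|split; [exact: ST i102|left]].
  exists a, b; split; first exact: T1b.
  symmetry; apply: rotate_eqX i012 i102 (rk3_good _ _ _) (rk3_good _ _ _) bX T3b T3a _.
  move=> w /inX [->|->|->]; rewrite ?eqxx // => _ _.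
  rewrite T1c eqxx (T3c_P nac).
  have -> : [exists y in subtree (par_rk R1) c, e a y] = false.
    apply/existsP => -[y /andP [Hy Hey]].
    by move: Hey; rewrite (leaf T1_leaf_c Hy) (negbTE nac).
  by [].
split.
  split; [exact: ST i102|split; [exact: ST i210|left]].
  exists b, c; split; first exact: T3c_P.
  symmetry; apply: rotate_eqX i102 i210 (rk3_good _ _ _) (rk3_good _ _ _) cX _ T4b _.
    by rewrite T4c T3b.
  move=> w /inX [->|->|->]; rewrite ?eqxx // => _ _.
  by rewrite T3a T4a Some_eqF.
split.
  split; [exact: ST i210|split; [exact: ST i120|left]].
  exists b, a; split; first exact: T4a.
  symmetry; apply: rotate_eqX i210 i120 (rk3_good _ _ _) (rk3_good _ _ _) aX _ T5b _.
    by rewrite T5a T4b.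
  move=> w /inX [->|->|->]; rewrite ?eqxx // => _ _.
  by rewrite T4c T5c (negbTE (P_notX aX)).
split.
  split; [exact: ST i120|split; [exact: ST i021|left]].
  exists c, a; split; first exact: T5a.
  symmetry; apply: rotate_eqX i120 i021 (rk3_good _ _ _) (rk3_good _ _ _) aX _ T2c _.
    by rewrite T2a T5c.
  move=> w /inX [->|->|->]; rewrite ?eqxx // => _ _.
  rewrite T5b eqxx T2b.
  have -> : [exists y in subtree (par_rk R5) b, e c y] = true.
    by apply/existsP; exists b; rewrite in_sub ecb.
  by [].
split; [exact: ST i021|split; [exact: ST i012|left]].
exists c, b; split; first exact: T2b.
symmetry; apply: rotate_eqX i021 i012 (rk3_good _ _ _) (rk3_good _ _ _) bX _ T1c _.
  by rewrite T1b T2c.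
move=> w /inX [->|->|->]; rewrite ?eqxx // => _ _.
by rewrite T2a (negbTE (P_notX bX)).
Qed.

Lemma edgeK : e a c -> exists p q, rot_adj e p q.
Proof.
move=> eac.
have ST : forall R, injective R -> search_tree e (par_rk R).
  by move=> R iR; exact: search_rk iR e_conn a.
exists (par_rk R1), (par_rk R3).
split; [exact: ST i012|split; [exact: ST i102|left]].
exists a, b; split; first exact: T1b.
symmetry; apply: rotate_eqX i012 i102 (rk3_good _ _ _) (rk3_good _ _ _) bX T3b T3a _.
move=> w /inX [->|->|->]; rewrite ?eqxx // => _ _.
rewrite T1c eqxx (T3c_K eac).
have -> : [exists y in subtree (par_rk R1) c, e a y] = true.
  by apply/existsP; exists c; rewrite in_sub eac.
by [].
Qed.
End Five.
End Gen.

Section Tree.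
Variables (T : finType) (e : rel T).

Lemma compE' (S : {set T}) x y : (y \in Defs.comp e S x) = connect (induced e S) x y.
Proof. by rewrite /Defs.comp inE. Qed.

Lemma comp_sub (S : {set T}) x : x \in S -> Defs.comp e S x \subset S.
Proof.
move=> xS; apply/subsetP => y; rewrite compE' => /connectP [[|z q]] /=.
  by move=> _ ->.
case/andP => /and3P [_ zS _] pth ->.
have cl : closed (induced e S) (mem S) by move=> a b /and3P [-> -> _].
have H : connect (induced e S) z (last z q) by apply/connectP; exists q.
by rewrite -(closed_connect cl H).
Qed.

Lemma comp_in (S : {set T}) x : x \in Defs.comp e S x.
Proof. by rewrite compE' connect0. Qed.

Lemma comp_lt (S : {set T}) r x : r \in S -> x \in S :\ r -> #|Defs.comp e (S :\ r) x| < #|S|.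
Proof.
move=> rS xS; have := subset_leq_card (comp_sub xS).
by rewrite (cardsD1 r S) rS add1n ltnS.
Qed.

Lemma stree_reach (p : {ffun T -> option T}) S r : stree e p S r -> forall x, x \in S ->
  exists n, iter n (pfun p) x = r.
Proof.
have [n] := ubnP #|S|; elim: n S r => // n IH S r Hn Hst.
case: Hst Hn IH => {}S {}r rS H Hn IH x xS.
case: (eqVneq x r) => [->|xr]; first by exists 0.
have xS' : x \in S :\ r by rewrite in_setD1 xr xS.
case: (H x xS') => c cC [pc Hc].
have [k Hk] := IH _ _ (leq_trans (comp_lt rS xS') Hn) Hc x (comp_in _ _).
by exists k.+1; rewrite iterS Hk /pfun pc.
Qed.

Lemma stree_par (p : {ffun T -> option T}) S r : stree e p S r -> forall x, x \in S -> x != r ->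
  exists2 z, z \in S & p x = Some z.
Proof.
have [n] := ubnP #|S|; elim: n S r => // n IH S r Hn Hst.
case: Hst Hn IH => {}S {}r rS H Hn IH x xS xr.
have xS' : x \in S :\ r by rewrite in_setD1 xr xS.
case: (H x xS') => c cC [pc Hc].
case: (eqVneq x c) => [->|xc]; first by exists r.
have [z zC pz] := IH _ _ (leq_trans (comp_lt rS xS') Hn) Hc x (comp_in _ _) xc.
exists z => //; move: (subsetP (comp_sub xS') _ zC); by rewrite in_setD1 => /andP [].
Qed.

Lemma search_root p r : search_tree e p -> p r = None ->
  forall x, p x = None -> x = r.
Proof.
case=> r0 pr0 Hst pr x px.
have E : forall y, p y = None -> y = r0.
  move=> y py; case: (eqVneq y r0) => // yr.
  by case: (stree_par Hst (in_setT y) yr) => z _; rewrite py.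
by rewrite (E _ px) (E _ pr).
Qed.

Section Complete.
Hypothesis ecomp : forall x y, x != y -> e x y.

Lemma comp_complete (S : {set T}) x : x \in S -> Defs.comp e S x = S.
Proof.
move=> xS; apply/eqP; rewrite eqEsubset comp_sub //=; apply/subsetP => y yS.
rewrite compE'; case: (eqVneq x y) => [->|xy]; first exact: connect0.
by apply: connect1; rewrite /induced xS yS ecomp.
Qed.

Lemma stree_child_uniq (p : {ffun T -> option T}) S r : stree e p S r -> forall x y, x \in S -> y \in S ->
  x != r -> y != r -> p x = p y -> x = y.
Proof.
have [n] := ubnP #|S|; elim: n S r => // n IH S r Hn Hst.
case: Hst Hn IH => {}S {}r rS H Hn IH x y xS yS xr yr pxy.
have xS' : x \in S :\ r by rewrite in_setD1 xr xS.
have yS' : y \in S :\ r by rewrite in_setD1 yr yS.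
case: (H x xS') => c; rewrite comp_complete // => cC [pc Hc].
have Hlt : #|S :\ r| < n.
  by move: Hn; rewrite (cardsD1 r S) rS add1n ltnS.
have notr : forall z, z \in S :\ r -> z != c -> p z <> Some r.
  move=> z zS zc pz; case: (stree_par Hc zS zc) => w wS; rewrite pz => -[Ew].
  by move: wS; rewrite -Ew in_setD1 eqxx.
case: (eqVneq x c) => [Exc|xc]; case: (eqVneq y c) => [Eyc|yc].
- by rewrite Exc Eyc.
- by case: (notr y yS' yc); rewrite -pxy Exc.
- by case: (notr x xS' xc); rewrite pxy Eyc.
- exact: (IH _ _ Hlt Hc x y xS' yS' xc yc pxy).
Qed.
End Complete.

Definition depth (p : {ffun T -> option T}) (x : T) : nat :=
  match excluded_middle_informative
          (exists n, p (iter n (pfun p) x) == None) with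
  | left H => ex_minn H
  | right _ => 0
  end.

Definition reach (p : {ffun T -> option T}) :=
  forall x, exists n, p (iter n (pfun p) x) == None.

Lemma search_reach p : search_tree e p -> reach p.
Proof.
case=> r pr Hst x; have [n Hn] := stree_reach Hst (in_setT x).
by exists n; rewrite Hn pr.
Qed.

Lemma depthP p x : reach p ->
  p (iter (depth p x) (pfun p) x) = None /\
  forall m, p (iter m (pfun p) x) = None -> depth p x <= m.
Proof.
move=> R; rewrite /depth; case: excluded_middle_informative => [H|H]; last by case: H.
case: ex_minnP => m /eqP Hm Hmin; split => // k Hk; apply: Hmin; exact/eqP.
Qed.

Lemma depth0 p x : reach p -> p x = None -> depth p x = 0.
Proof. by move=> R px; have [_ H] := depthP x R; apply/eqP; rewrite -leqn0 H. Qed.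

Lemma depthS p x y : reach p -> p x = Some y -> depth p x = (depth p y).+1.
Proof.
move=> R pxy.
have E : forall k, iter k.+1 (pfun p) x = iter k (pfun p) y.
  by move=> k; rewrite iterSr /pfun pxy.
have [Hx Hxm] := depthP x R; have [Hy Hym] := depthP y R.
move: Hx Hxm; case Hd: (depth p x) => [|d] Hx Hxm.
  by move: Hx; rewrite /= pxy.
congr S; apply/eqP; rewrite eqn_leq; apply/andP; split.
  by rewrite -ltnS Hxm // E.
by apply: Hym; rewrite -E.
Qed.

Lemma depth_uniq p (h : T -> nat) : reach p ->
  (forall x, p x = None -> h x = 0) ->
  (forall x y, p x = Some y -> h x = (h y).+1) ->
  forall x, h x = depth p x.
Proof.
move=> R H0 HS x; suff: forall k x, depth p x = k -> h x = k by move=> H; apply: H.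
elim=> [|k IH] {}x Hk.
  by apply: H0; have [H _] := depthP x R; rewrite Hk in H.
case Hpx: (p x) => [y|]; last by rewrite (depth0 R Hpx) in Hk.
rewrite (HS _ _ Hpx) (IH y) //; by move: Hk; rewrite (depthS R Hpx) => -[].
Qed.

Lemma depth_iter p x j : reach p -> j <= depth p x ->
  depth p (iter j (pfun p) x) = depth p x - j.
Proof.
move=> R; elim: j => [|j IH] Hj; first by rewrite subn0.
have := IH (ltnW Hj); set z := iter j (pfun p) x => Hz.
case Hpz: (p z) => [y|].
  have Hd := depthS R Hpz.
  by rewrite iterS -/z /pfun Hpz /= subnS -Hz Hd.
by move: Hz; rewrite (depth0 R Hpz) => /esym/eqP; rewrite subn_eq0 leqNgt Hj.
Qed.

Lemma depth_lt p x : reach p -> depth p x < #|T|.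
Proof.
move=> R; rewrite cardT.
have -> : (depth p x).+1 = size (iota 0 (depth p x).+1) by rewrite size_iota.
rewrite -(size_map (depth p)); apply: uniq_leq_size; first exact: iota_uniq.
move=> k; rewrite mem_iota add0n ltnS => /andP [_ Hk].
have -> : k = depth p (iter (depth p x - k) (pfun p) x).
  by rewrite depth_iter ?leq_subr // subKn.
by apply: map_f; rewrite mem_enum.
Qed.

Section Complete2.
Hypothesis ecomp : forall x y, x != y -> e x y.

Lemma depth_inj p : search_tree e p -> injective (depth p).
Proof.
move=> Hp; have R := search_reach Hp; case: (Hp) => r pr Hst.
have nr : forall z y, p z = Some y -> z != r.
  by move=> z y pz; apply/eqP => Ez; rewrite Ez pr in pz.
move=> x0 y0 Hxy0; suff: forall k x y, depth p x = depth p y -> depth p x = k -> x = y.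
  by move=> H; exact: H _ _ _ Hxy0 erefl.
elim=> [|k IH] x y Hxy Hk.
  have [Hx _] := depthP x R; have [Hy _] := depthP y R.
  rewrite Hk /= in Hx; rewrite -Hxy Hk /= in Hy.
  by rewrite (search_root Hp Hx Hy).
case Hpx: (p x) => [x'|]; last by rewrite (depth0 R Hpx) in Hk.
case Hpy: (p y) => [y'|]; last by rewrite Hxy (depth0 R Hpy) in Hk.
have Ex : depth p x' = k by move: Hk; rewrite (depthS R Hpx) => -[].
have Ey : depth p y' = k by move: Hk; rewrite Hxy (depthS R Hpy) => -[].
have E' : x' = y' by apply: IH => //; rewrite Ex Ey.
apply: (stree_child_uniq ecomp Hst (in_setT x) (in_setT y) (nr _ _ Hpx) (nr _ _ Hpy)).
by rewrite Hpx Hpy E'.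
Qed.

Definition gd p x := nth x (enum T) (depth p x).

Lemma gd_inj p : search_tree e p -> injective (gd p).
Proof.
move=> Hp x y; have R := search_reach Hp.
have Hx := depth_lt x R; have Hy := depth_lt y R; rewrite cardT in Hx Hy.
rewrite /gd (set_nth_default x y Hy) => /eqP.
rewrite nth_uniq ?enum_uniq // => /eqP; exact: depth_inj.
Qed.

Definition sgn p : bool :=
  if [pick s : {perm T} | [forall x, s x == gd p x]] is Some s
  then odd_perm s else false.

Lemma sgnE p (s : {perm T}) : (forall x, s x = gd p x) -> sgn p = odd_perm s.
Proof.
move=> Hs; rewrite /sgn; case: pickP => [s' /forallP Hs'|H].
  by congr odd_perm; apply/permP => x; rewrite Hs; apply/eqP.
by move: (H s) => /forallP []; move=> x; rewrite Hs.
Qed.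

Lemma par_neq p u v : reach p -> p v = Some u -> u != v.
Proof.
move=> R pvu; apply/eqP => Euv; have := depthS R pvu; rewrite Euv; lia.
Qed.

Lemma depth_rot p u v : search_tree e p -> search_tree e (rotate e p u v) ->
  p v = Some u -> forall x, depth (rotate e p u v) x = depth p (tperm u v x).
Proof.
move=> Hp Hq pvu x.
have Rp := search_reach Hp; have Rq := search_reach Hq.
case: (Hp) => r pr Hst.
have Hdv : depth p v = (depth p u).+1 by exact: depthS Rp pvu.
have uv := par_neq Rp pvu.
have nr : forall z y, p z = Some y -> z != r.
  by move=> z y pz; apply/eqP => Ez; rewrite Ez pr in pz.
have tD : forall z, z != u -> z != v -> tperm u v z = z.
  by move=> z zu zv; apply: tpermD; rewrite eq_sym.
symmetry; apply: (@depth_uniq _ (fun x => depth p (tperm u v x))) Rq _ _ x.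
- move=> z; rewrite /rotate ffunE.
  case: (eqVneq z v) => [->|zv] /=.
    by move=> pu; rewrite tpermR (depth0 Rp pu).
  case: (eqVneq z u) => [->|zu] //=.
  case: (eqVneq (p z) (Some v)) => [pz|pz] /=; first by case: ifP.
  by move=> pz0; rewrite tD // (depth0 Rp pz0).
- move=> z y; rewrite /rotate ffunE.
  case: (eqVneq z v) => [->|zv] /=.
    move=> puy; rewrite tpermR (depthS Rp puy).
    have yu : y != u.
      by apply/eqP => Eyu; rewrite Eyu in puy; have := depthS Rp puy; lia.
    have yv : y != v.
      by apply/eqP => Eyv; rewrite Eyv in puy; have := depthS Rp puy; lia.
    by rewrite tD.
  case: (eqVneq z u) => [->|zu] /=.
    by move=> [<-]; rewrite tpermL tpermR Hdv.
  case: (eqVneq (p z) (Some v)) => [pz|pz] /=.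
    have -> : [exists y0 in subtree p z, e u y0] = true.
      apply/existsP; exists z; rewrite /subtree inE connect0 /= ecomp //.
      by rewrite eq_sym.
    by move=> [<-]; rewrite tpermL tD // (depthS Rp pz) Hdv.
  move=> pzy; rewrite tD // (depthS Rp pzy).
  have yv : y != v by apply/eqP => Eyv; rewrite pzy Eyv eqxx in pz.
  have yu : y != u.
    apply/eqP => Eyu.
    have := stree_child_uniq ecomp Hst (in_setT z) (in_setT v) (nr _ _ pzy) (nr _ _ pvu).
    by rewrite pzy pvu Eyu => /(_ erefl) Ezv; rewrite Ezv eqxx in zv.
  by rewrite tD.
Qed.

Lemma sgn_rot p u v : search_tree e p -> search_tree e (rotate e p u v) ->
  p v = Some u -> sgn (rotate e p u v) = ~~ sgn p.
Proof.
move=> Hp Hq pvu.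
have Rp := search_reach Hp; have Rq := search_reach Hq.
have uv := par_neq Rp pvu.
set sp := perm (gd_inj Hp).
rewrite (sgnE (permE (gd_inj Hp))).
rewrite (@sgnE _ (tperm u v * sp)%g); first by rewrite odd_permM odd_tperm uv.
move=> x; rewrite permM permE /gd (depth_rot Hp Hq pvu).
apply: set_nth_default; rewrite -cardT; exact: depth_lt.
Qed.

End Complete2.
End Tree.

Lemma C5_not2 (T : finType) (e : rel T) : rot_has_C5 e -> ~ rot_colorable e 2.
Proof.
case=> [p0 [p1 [p2 [p3 [p4 [_ [h01 [h12 [h23 [h34 h40]]]]]]]]]] [c [Hc Hp]].
have := Hp _ _ h01; have := Hp _ _ h12; have := Hp _ _ h23;
have := Hp _ _ h34; have := Hp _ _ h40.
have := Hc _ h01.1; have := Hc _ h12.1; have := Hc _ h23.1;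
have := Hc _ h34.1; have := Hc _ h40.1.
lia.
Qed.

Lemma noncomplete_C5 (T : finType) (e : rel T) (e_sym : symmetric e)
  (e_irr : irreflexive e) (e_conn : forall x y : T, connect e x y) :
  ~ complete_graph e -> rot_has_C5 e.
Proof.
move=> nc.
have [x [y [xy nxy]]] : exists x y, x != y /\ ~~ e x y.
  apply: NNPP => H; apply: nc => x y xy; apply: NNPP => nxy; apply: H.
  by exists x, y; split => //; apply/negP.
pose A := [pred z | (z == x) || e x z].
have [b [c [bA [ebc cA]]]] : exists b c, b \in A /\ e b c /\ c \notin A.
  apply: NNPP => H.
  have cl : closed e A.
    move=> u w euw; apply/idP/idP => Hu; apply: NNPP => Hw; apply: H.
      by exists u, w; split => //; split => //; apply/negP.
    by exists w, u; split => //; split; [rewrite e_sym | apply/negP].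
  have := closed_connect cl (e_conn x y).
  rewrite !inE eqxx /= => /esym /orP [/eqP Eyx|exy].
    by rewrite Eyx eqxx in xy.
  by rewrite exy in nxy.
move: cA; rewrite !inE negb_or => /andP [cx nxc].
move: bA; rewrite !inE => /orP [/eqP Ebx|exb].
  by rewrite -Ebx ebc in nxc.
have xb : x != b by apply/eqP => E; rewrite E e_irr in exb.
have bc : b != c by apply/eqP => E; rewrite E e_irr in ebc.
have xc : x != c by rewrite eq_sym.
exact: (C5 e_sym xb bc xc exb ebc e_irr e_conn nxc).
Qed.

Lemma complete_chi2 (T : finType) (e : rel T) (e_sym : symmetric e)
  (e_conn : forall x y : T, connect e x y) (hT : 3 <= #|T|) :
  complete_graph e -> rot_chromatic_number e 2.
Proof.
move=> ecomp; split.
  exists (fun p => nat_of_bool (sgn p)); split.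
    by move=> p _; case: (sgn p).
  move=> p q [Hp [Hq [[u [v [pvu Eq]]]|[u [v [qvu Ep]]]]]].
    subst q; rewrite (sgn_rot ecomp Hp Hq pvu); by case: (sgn p).
  subst p; rewrite (sgn_rot ecomp Hq Hp qvu); by case: (sgn q).
have /card_gt0P [x0 _] : 0 < #|T| by lia.
set s := enum T.
have ss : size s = #|T| by rewrite cardT.
have D : forall i j, i < 3 -> j < 3 -> i != j -> nth x0 s i != nth x0 s j.
  by move=> i j hi hj ij; rewrite nth_uniq ?enum_uniq // ss; lia.
have ab := D 0 1 isT isT isT; have bc := D 1 2 isT isT isT; have ac := D 0 2 isT isT isT.
have [p [q Hpq]] := edgeK e_sym ab bc ac (ecomp _ _ ab) (ecomp _ _ bc) e_conn (ecomp _ _ ac).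
move=> j [c [Hc Hp]].
have := Hp _ _ Hpq; have := Hc _ Hpq.1; have := Hc _ Hpq.2.1; lia.
Qed.

Theorem lemma3p1 (T : finType) (e : rel T)
  (e_sym : symmetric e) (e_irr : irreflexive e)
  (e_conn : forall x y : T, connect e x y)
  (hT : 3 <= #|T|) :
  (complete_graph e <-> rot_chromatic_number e 2) /\
  (rot_chromatic_number e 2 <-> ~ rot_has_C5 e).
Proof.
have H1 := complete_chi2 e_sym e_conn hT.
have H2 := noncomplete_C5 e_sym e_irr e_conn.
split; split.
- exact: H1.
- move=> [col _]; apply: NNPP => nc; exact: C5_not2 (H2 nc) col.
- by move=> [col _] h5; exact: C5_not2 h5 col.
- move=> n5; apply: H1; apply: NNPP => nc; exact: n5 (H2 nc).
Qed.
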